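(* Let $q$ be a prime power, $\ell\geq 1$, and let $\mathcal{A}$ be a central hyperplane arrangement in $\mathbb{F}_q^\ell$. The following are equivalent: (a) $\mathcal{A}=\mathcal{A}_{all}(\mathbb{F}_q^\ell)$; (b) $|\mathcal{A}|=\frac{q^\ell-1}{q-1}$; (c) $\chi(\mathcal{A},t)=(t-1)(t-q)\cdots(t-q^{\ell-1})$; (d) $\chi(\mathcal{A},q^{\ell-1})=0$.
   Context: A (central) hyperplane arrangement $\mathcal{A}$ in a vector space $V$ over a field $\mathbb{K}$ is a finite set of linear subspaces of codimension one. $\mathcal{A}_{all}(V)$ denotes the arrangement consisting of all hyperplanes (codimension-one linear subspaces) of $V$ when $V$ is a vector space over a finite field. $L(\mathcal{A})$ denotes the set of all intersections of subsets of $\mathcal{A}$ (including $V$ itself), ordered by reverse inclusion, with minimal element $\hat 0=V$. The Möbius function $\mu$ on $L(\mathcal{A})$ is defined by $\mu(\hat0)=1$ and $\mu(X)=-\sum_{Y<X}\mu(Y)$ for $X>\hat0$. The characteristic polynomial is $\chi(\mathcal{A},t)=\sum_{X\in L(\mathcal{A})}\mu(X)t^{\dim X}$. *)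

(* Defs.v *)
(* Subspaces of F^l (F a finite field, q = #|F|) are
   represented by their canonical row-space matrices <<M>>%MS : 'M[F]_l. *)
From HB Require Import structures.
From mathcomp Require Import all_boot all_order all_algebra all_field.
Set Implicit Arguments. Unset Strict Implicit. Unset Printing Implicit Defensive.
Import GRing.Theory.
Local Open Scope ring_scope.

Section Arr.
Variables (F : finFieldType) (l : nat).

Definition is_subspace (M : 'M[F]_l) : bool := (<<M>>%MS == M).

Definition is_hyperplane (H : 'M[F]_l) : bool :=
  is_subspace H && (\rank H == l.-1)%N.

Definition arrangement (A : {set 'M[F]_l}) : bool :=
  [forall H in A, is_hyperplane H].

Definition A_all : {set 'M[F]_l} := [set H | is_hyperplane H].

Definition fullsp : 'M[F]_l := <<(1%:M : 'M[F]_l)>>%MS.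

(* intersection of a subset B of A (empty intersection = V) *)
Definition meet (B : {set 'M[F]_l}) : 'M[F]_l :=
  <<(\bigcap_(H in B) H)%MS>>%MS.

Definition intlat (A : {set 'M[F]_l}) : {set 'M[F]_l} :=
  [set meet B | B in powerset A].

(* Moebius function on L(A) (ordered by reverse inclusion, so Y < X in L(A)
   iff X is a proper subspace of Y), computed with a fuel argument:
   mu(V) = 1, mu(X) = - sum_{Y < X} mu(Y).  Ranks strictly increase along
   the recursion and are bounded by l, so fuel l.+1 is sufficient. *)
Fixpoint mobius_fuel (A : {set 'M[F]_l}) (n : nat) (X : 'M[F]_l) : int :=
  match n with
  | 0 => 1
  | n'.+1 =>
      if X == fullsp then 1
      else - \sum_(Y in intlat A | (X < Y)%MS) mobius_fuel A n' Y
  end.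

Definition mobius (A : {set 'M[F]_l}) (X : 'M[F]_l) : int :=
  mobius_fuel A l.+1 X.

Definition charpoly_arr (A : {set 'M[F]_l}) : {poly int} :=
  \sum_(X in intlat A) (mobius A X)%:P * 'X^(\rank X).

End Arr.

(* Main.v *)
Require Import Defs.
From HB Require Import structures.
From mathcomp Require Import all_boot all_order all_algebra all_field.
From mathcomp Require Import zify.
Set Implicit Arguments. Unset Strict Implicit. Unset Printing Implicit Defensive.
Import GRing.Theory Num.Theory.
Local Open Scope ring_scope.

Section Main.
Variables (F : finFieldType) (l : nat).
Hypothesis hl : (1 <= l)%N.
Local Notation q := #|F|.
Local Notation M := ('M[F]_l).

Lemma canon_eq (X Y : M) : <<X>>%MS = X -> <<Y>>%MS = Y ->
  (X <= Y)%MS -> (\rank Y <= \rank X)%N -> X = Y.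
Proof.
move=> cX cY sXY rYX.
have /eqmxP e : (X == Y)%MS.
  by rewrite -(mxrank_leqif_eq sXY); apply/eqP/anti_leq; rewrite rYX mxrankS.
by rewrite -cX -cY; apply: eq_genmx.
Qed.

Lemma meet_canon (B : {set M}) : <<meet B>>%MS = meet B.
Proof. by rewrite /meet genmx_id. Qed.

Lemma intlat_canon (A : {set M}) X : X \in intlat A -> <<X>>%MS = X.
Proof. by case/imsetP=> B _ ->; apply: meet_canon. Qed.

Lemma meet0 : meet set0 = fullsp F l.
Proof. by rewrite /meet /fullsp big_pred0 // => H; rewrite inE. Qed.

Lemma fullsp_in (A : {set M}) : fullsp F l \in intlat A.
Proof. by rewrite -meet0; apply: imset_f; rewrite powersetE sub0set. Qed.

Lemma fullsp_canon : <<fullsp F l>>%MS = fullsp F l.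
Proof. by rewrite /fullsp genmx_id. Qed.

Lemma rank_fullsp : \rank (fullsp F l) = l.
Proof. by rewrite /fullsp genmxE mxrank1. Qed.

Lemma full_eq (X : M) : <<X>>%MS = X -> \rank X = l -> X = fullsp F l.
Proof.
move=> cX rX; apply: canon_eq => //; first exact: fullsp_canon.
  by rewrite /fullsp genmxE submx1.
by rewrite rX rank_fullsp.
Qed.

Lemma meet_sub (B : {set M}) H : H \in B -> (meet B <= H)%MS.
Proof. by move=> HB; rewrite /meet genmxE; apply: bigcapmx_inf HB _. Qed.

Lemma sub_meet n (W : 'M[F]_(n, l)) (B : {set M}) :
  (W <= meet B)%MS = [forall H in B, W <= H]%MS.
Proof.
rewrite /meet genmxE; apply/sub_bigcapmxP/forall_inP => h H HB; exact: h.
Qed.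

Lemma mf_stable (A : {set M}) n X : (l - \rank X < n)%N ->
  mobius_fuel A n X = mobius_fuel A n.+1 X.
Proof.
elim: n X => [//|n IH] X hX /=.
case: eqP => // _; congr (- _); apply: eq_bigr => Y /andP [_ XY].
apply: IH; rewrite ltmxErank in XY; case/andP: XY => _ XY.
have := rank_leq_col Y; rewrite -ltnS in hX.
move: hX XY; move: (\rank X) (\rank Y) => a b; lia.
Qed.

Lemma mf_big (A : {set M}) n X : (l - \rank X < n)%N ->
  mobius_fuel A n X = mobius A X.
Proof.
move=> h.
have e : forall k, mobius_fuel A ((l - \rank X).+1 + k) X =
                   mobius_fuel A (l - \rank X).+1 X.
  elim=> [|k IH]; first by rewrite addn0.
  by rewrite addnS -mf_stable ?IH // ltnS leq_addr.
rewrite /mobius -(subnKC h) -[in RHS](subnKC (_ : (l - \rank X).+1 <= l.+1)%N).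
  by rewrite !e.
by rewrite ltnS leq_subr.
Qed.


Lemma mobius_full (A : {set M}) : mobius A (fullsp F l) = 1.
Proof. by rewrite /mobius /= eqxx. Qed.

Lemma mobius_key (A : {set M}) X : X \in intlat A ->
  \sum_(Y in intlat A | (X <= Y)%MS) mobius A Y = (X == fullsp F l)%:R.
Proof.
move=> XL; have cX := intlat_canon XL.
case: eqP => [->|nX].
  rewrite (eq_bigl (pred1 (fullsp F l))) ?big_pred1_eq ?mobius_full //.
  move=> Y /=; apply/andP/eqP => [[YL sY]|->]; last first.
    by rewrite fullsp_in submx_refl.
  apply: full_eq; first exact: intlat_canon YL.
  apply/eqP; rewrite eqn_leq rank_leq_col -{1}rank_fullsp mxrankS //.
rewrite (bigD1 X) /=; last by rewrite XL submx_refl.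
rewrite {1}/mobius /=; move/eqP/negbTE: nX => ->.
set S := \sum_(i in intlat A | (X < i)%MS) mobius_fuel A l i.
suff -> : \sum_(Y | (Y \in intlat A) && (X <= Y)%MS && (Y != X)) mobius A Y = S.
  by rewrite addNr.
apply: eq_big.
  move=> Y; rewrite -andbA; apply: andb_id2l => YL; rewrite ltmxE.
  apply: andb_id2l => sXY; congr negb; apply/eqP/idP => [<-|sYX].
    exact: submx_refl.
  by apply: canon_eq => //; [exact: intlat_canon YL | exact: mxrankS].
move=> Y /andP [/andP [YL sXY] nYX]; symmetry; apply: mf_big.
have XY : (\rank X < \rank Y)%N.
  rewrite ltnNge; apply: contra nYX => rYX; apply/eqP; apply: esym.
  by apply: canon_eq => //; exact: intlat_canon YL.
have := rank_leq_col Y; move: XY; move: (\rank X) (\rank Y) => a b; lia.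
Qed.


Lemma card_sub k p m (X : 'M[F]_(m, p)) :
  #|[set W : 'M[F]_(k, p) | (W <= X)%MS]| = (q ^ (k * \rank X))%N.
Proof.
have -> : [set W : 'M[F]_(k, p) | (W <= X)%MS] =
          [set C *m row_base X | C in [set: 'M[F]_(k, \rank X)]].
  apply/setP => W; rewrite inE -(eq_row_base X).
  apply/submxP/imsetP => [[D ->]|[D _ ->]]; by exists D.
rewrite card_imset; first by rewrite cardsT card_mx.
exact: row_free_inj (row_base_free X).
Qed.

Definition sW (A : {set M}) n (W : 'M[F]_(n, l)) : M :=
  meet [set H in A | (W <= H)%MS].

Lemma sW_in (A : {set M}) n (W : 'M[F]_(n, l)) : sW A W \in intlat A.
Proof.
by apply: imset_f; rewrite powersetE; apply/subsetP => H; rewrite inE => /andP[].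
Qed.

Lemma sW_sub (A : {set M}) n (W : 'M[F]_(n, l)) X : X \in intlat A ->
  (W <= X)%MS = (sW A W <= X)%MS.
Proof.
case/imsetP => B; rewrite powersetE => /subsetP BA ->.
apply/idP/idP => [sWB|sS].
  rewrite /meet genmxE; apply/sub_bigcapmxP => H HB.
  apply: meet_sub; rewrite inE BA //=.
  by move: sWB; rewrite sub_meet => /forall_inP; apply.
apply: submx_trans sS; rewrite sub_meet; apply/forall_inP => H.
by rewrite inE => /andP[].
Qed.

Lemma sW_full (A : {set M}) (hA : arrangement A) n (W : 'M[F]_(n, l)) :
  (sW A W == fullsp F l) = [forall H in A, ~~ (W <= H)%MS].
Proof.
apply/eqP/forall_inP => [e H HA|h].
  apply/negP => sWH.
  have : (sW A W <= H)%MS by apply: meet_sub; rewrite inE HA.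
  move/mxrankS; rewrite e rank_fullsp.
  move/forall_inP: hA => /(_ H HA) /andP [_ /eqP ->]; lia.
rewrite /sW -meet0; congr meet; apply/setP => H; rewrite !inE.
by apply/negbTE; apply/negP => /andP [HA sWH]; move: (h H HA); rewrite sWH.
Qed.

Lemma ffm (A : {set M}) (hA : arrangement A) n :
  \sum_(X in intlat A) mobius A X * ((q ^ n) ^ \rank X)%N%:R =
  (#|[set W : 'M[F]_(n, l) | [forall H in A, ~~ (W <= H)%MS]]|)%:R.
Proof.
have e X : ((q ^ n) ^ \rank X)%N%:R =
           \sum_(W : 'M[F]_(n, l)) ((W <= X)%MS : nat)%:R :> int.
  rewrite -expnM -(card_sub n X) -natr_sum; congr (_%:R).
  by rewrite -sum1_card big_mkcond /=; apply: eq_bigr => W _; rewrite inE.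
under eq_bigr do rewrite e mulr_sumr.
rewrite exchange_big /= -sum1_card natr_sum [RHS]big_mkcond /=.
apply: eq_bigr => W _; rewrite inE -sW_full //.
rewrite (_ : (if _ then _ else _) = (sW A W == fullsp F l)%:R); last by case: eqP.
rewrite -(mobius_key (sW_in A W)) big_mkcondr /=.
apply: eq_bigr => X XL; rewrite -sW_sub //.
by case: (W <= X)%MS; rewrite ?mulr1 ?mulr0.
Qed.


Lemma charpoly_eval (A : {set M}) (x : int) :
  (charpoly_arr A).[x] = \sum_(X in intlat A) mobius A X * x ^+ \rank X.
Proof.
rewrite /charpoly_arr horner_sum; apply: eq_bigr => X _.
by rewrite hornerM hornerC hornerXn.
Qed.

Lemma eval_count (A : {set M}) (hA : arrangement A) n :
  (charpoly_arr A).[(q ^ n)%N%:R] =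
  (#|[set W : 'M[F]_(n, l) | [forall H in A, ~~ (W <= H)%MS]]|)%:R.
Proof.
rewrite charpoly_eval -ffm //.
apply: eq_bigr => X _; by rewrite [in RHS]natrX.
Qed.

Lemma A_sub (A : {set M}) (hA : arrangement A) : A \subset A_all F l.
Proof.
by apply/subsetP => H HA; rewrite inE; move/forall_inP: hA; apply.
Qed.

Lemma d_a (A : {set M}) (hA : arrangement A) :
  (charpoly_arr A).[(q ^ l.-1)%N%:R] = 0 -> A = A_all F l.
Proof.
rewrite eval_count // => /eqP; rewrite pnatr_eq0 cards_eq0 => /eqP e.
apply/eqP; rewrite eqEsubset A_sub //=; apply/subsetP => H0 H0all.
apply/negPn/negP => H0A.
have := H0all; rewrite inE => /andP [cH0 /eqP rH0].
pose W0 : 'M[F]_(l.-1, l) := castmx (rH0, erefl l) (row_base H0).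
suff : W0 \in [set W : 'M[F]_(l.-1, l) | [forall H in A, ~~ (W <= H)%MS]].
  by rewrite e inE.
rewrite inE; apply/forall_inP => H HA; apply/negP.
rewrite /W0 (eqmx_cast _ (rH0, erefl l)) eq_row_base => sH.
move/forall_inP: hA => /(_ H HA) /andP [/eqP cH /eqP rH].
have eH : H0 = H by apply: canon_eq => //; [exact/eqP | rewrite rH rH0].
by move: H0A; rewrite eH HA.
Qed.


Lemma free_col_mx m n (r : 'rV[F]_n) (Mx : 'M[F]_(m, n)) :
  row_free (col_mx r Mx) = row_free Mx && ~~ (r <= Mx)%MS.
Proof.
rewrite /row_free -addsmxE.
case: (boolP (r <= Mx)%MS) => h.
  rewrite andbF (addsmx_idPr h).
  by apply/negbTE; rewrite neq_ltn ltnS rank_leq_row.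
rewrite andbT.
have e : \rank (r + Mx)%MS = (1 + \rank Mx)%N.
  apply/eqP; rewrite eqn_leq; apply/andP; split.
    apply: leq_trans (mxrank_adds_leqif r Mx) _.
    by rewrite leq_add2r rank_leq_row.
  rewrite add1n; suff : (Mx < r + Mx)%MS by rewrite ltmxErank => /andP[].
  by rewrite ltmxE addsmxSr addsmx_sub submx_refl andbT.
by rewrite e eqn_add2l.
Qed.

Lemma count_free m n :
  #|[set Mx : 'M[F]_(m, n) | row_free Mx]| = (\prod_(i < m) (q ^ n - q ^ i))%N.
Proof.
elim: m => [|m IH].
  rewrite big_ord0 (_ : [set Mx | _] = setT) ?cardsT ?card_mx ?muln0 //.
  by apply/setP => Mx; rewrite !inE /row_free eqn_leq rank_leq_row.
rewrite big_ord_recr /= -IH.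
rewrite -[LHS]sum1_card [LHS]big_mkcond /=.
rewrite (reindex (fun p : 'rV[F]_n * 'M[F]_(m, n) => col_mx p.1 p.2 : 'M_(1 + m, n))) /=;
  last first.
  apply: onW_bij; exists (fun Mx : 'M[F]_(1 + m, n) => (usubmx Mx, dsubmx Mx)).
    by case=> a b /=; rewrite col_mxKu col_mxKd.
  by move=> Mx /=; rewrite vsubmxK.
rewrite -(pair_bigA _ (fun a b => if col_mx a b \in [set Mx | row_free Mx] then 1 else 0)%N).
rewrite exchange_big /= -sum1_card [in RHS]big_mkcond /= big_distrl /=.
apply: eq_bigr => Mx _; rewrite !inE.
under eq_bigr do rewrite inE free_col_mx.
case: (boolP (row_free Mx)) => fM /=; last by rewrite big1 ?mul0n.
rewrite mul1n.
have -> : (\sum_(r : 'rV[F]_n) (if ~~ (r <= Mx)%MS then 1 else 0))%N =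
          #|~: [set r : 'rV[F]_n | (r <= Mx)%MS]|.
  by rewrite -sum1_card [in RHS]big_mkcond /=; apply: eq_bigr => r _; rewrite !inE.
move: (cardsC [set r : 'rV[F]_n | (r <= Mx)%MS]).
rewrite card_sub card_mx !mul1n; move/eqP: fM => ->.
move=> <-; by rewrite addKn.
Qed.


Lemma hyp_row_full n (W : 'M[F]_(n, l)) :
  [forall H in A_all F l, ~~ (W <= H)%MS] = row_full W.
Proof.
apply/forall_inP/idP => [h|fW H]; last first.
  rewrite inE => /andP [_ /eqP rH]; apply/negP => /mxrankS.
  move: fW; rewrite /row_full => /eqP ->; rewrite rH; lia.
apply/negPn/negP => nf.
set C := cokermx W.
have C0 : C != 0.
  rewrite -mxrank_eq0 mxrank_coker; move: nf; rewrite /row_full.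
  have := rank_leq_col W; move: (\rank W) => a; lia.
have [j nj] : exists j, col j C != 0.
  case: (pickP (fun j => col j C != 0)) => [j nj | all0]; first by exists j.
  move: C0; rewrite -[_ != _]/(~~ _) => /negP; case; apply/eqP/matrixP => i k.
  by move: (all0 k) => /negbFE/eqP/colP/(_ i); rewrite !mxE.
set v := col j C.
have rv : \rank v = 1%N.
  apply/eqP; rewrite eqn_leq rank_leq_col lt0n mxrank_eq0 nj //.
have Hh : <<kermx v>>%MS \in A_all F l.
  rewrite inE /is_hyperplane /is_subspace genmx_id eqxx /=.
  by rewrite genmxE mxrank_ker rv subn1.
apply: (negP (h _ Hh)); rewrite genmxE sub_kermx.
have -> : W *m v = col j (W *m C).
  by apply/matrixP => i k; rewrite !mxE; apply: eq_bigr => k' _; rewrite !mxE.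
by rewrite mulmx_coker; apply/eqP/matrixP => i k; rewrite !mxE.
Qed.

Lemma count_full n :
  #|[set W : 'M[F]_(n, l) | [forall H in A_all F l, ~~ (W <= H)%MS]]| =
  (\prod_(i < l) (q ^ n - q ^ i))%N.
Proof.
rewrite -count_free.
have -> : [set Mx : 'M[F]_(l, n) | row_free Mx] =
          trmx @: [set W : 'M[F]_(n, l) | [forall H in A_all F l, ~~ (W <= H)%MS]].
  apply/setP => Mx; rewrite inE; apply/idP/imsetP => [fM|[W]].
    exists Mx^T; last by rewrite trmxK.
    by rewrite inE hyp_row_full /row_full mxrank_tr.
  by rewrite inE hyp_row_full => fW ->; rewrite /row_free mxrank_tr.
by rewrite card_imset //; exact: trmx_inj.
Qed.


Lemma A_all_arr : arrangement (A_all F l).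
Proof. by apply/forall_inP => H; rewrite inE. Qed.

Lemma q_gt1 : (1 < q)%N.
Proof. exact: card_finNzRing_gt1. Qed.

Lemma charpoly_all :
  charpoly_arr (A_all F l) = \prod_(i < l) ('X - ((q ^ i)%:R)%:P).
Proof.
set P := charpoly_arr (A_all F l) - \prod_(i < l) ('X - ((q ^ i)%:R)%:P).
suff : P = 0 by move/eqP; rewrite /P subr_eq0 => /eqP.
have q1 := q_gt1.
have root_n k : P.[(q ^ (l + k))%N%:R] = 0.
  rewrite hornerD hornerN eval_count ?A_all_arr // count_full horner_prod.
  rewrite natr_prod; apply/eqP; rewrite subr_eq0; apply/eqP; apply: eq_bigr => i _.
  rewrite hornerXsubC natrB //; apply: leq_pexp2l; first lia.
  by have := ltn_ord i; lia.
apply/eqP; apply/negPn/negP => nz.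
pose D := map_poly (intr : int -> rat) P.
have Dnz : D != 0.
  by rewrite map_poly_eq0_id0 // intr_eq0 lead_coef_eq0.
pose rs := [seq ((q ^ (l + k))%N%:R : int)%:~R : rat | k <- iota 0 (size D)].
have := max_poly_roots Dnz (rs := rs).
rewrite size_map size_iota ltnn => h; suff : false by []; apply: h.
  apply/allP => x /mapP [k _ ->]; rewrite /root horner_map /= root_n.
  by rewrite rmorph0.
rewrite map_inj_uniq ?iota_uniq // => a b /intr_inj /eqP.
by rewrite eqr_nat => /eqP /(expnI q1) /addnI.
Qed.


Lemma hyp_of (A : {set M}) (hA : arrangement A) H :
  H \in A -> <<H>>%MS = H /\ \rank H = l.-1.
Proof.
by move/forall_inP: hA => h /h /andP [/eqP -> /eqP ->].
Qed.

Lemma L_hyp (A : {set M}) (hA : arrangement A) X :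
  (X \in intlat A) && (\rank X == l.-1) = (X \in A).
Proof.
apply/idP/idP => [/andP [XL /eqP rX]|HA].
  have cX := intlat_canon XL.
  case/imsetP: XL => B; rewrite powersetE => /subsetP BA eX.
  case: (set_0Vmem B) => [B0|[H HB]].
    by move: rX; rewrite eX B0 meet0 rank_fullsp; lia.
  have [cH rH] := hyp_of hA (BA _ HB).
  have -> : X = H.
    apply: canon_eq => //; last by rewrite rX rH.
    by rewrite eX; apply: meet_sub.
  exact: BA.
have [cH rH] := hyp_of hA HA.
rewrite rH eqxx andbT; apply/imsetP; exists [set X].
  by rewrite powersetE sub1set.
by rewrite /meet big_set1 cH.
Qed.

Lemma mobius_hyp (A : {set M}) (hA : arrangement A) H :
  H \in A -> mobius A H = -1.
Proof.
move=> HA; have [cH rH] := hyp_of hA HA.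
have HL : H \in intlat A by move: HA; rewrite -(L_hyp hA) => /andP[].
have nH : (H == fullsp F l) = false.
  by apply/negbTE; apply/eqP => eH; move: rH; rewrite eH rank_fullsp; lia.
have := mobius_key HL; rewrite nH (bigD1 H) /=; last by rewrite HL submx_refl.
rewrite (eq_bigl (pred1 (fullsp F l))) ?big_pred1_eq ?mobius_full.
  by move/eqP; rewrite addr_eq0 => /eqP.
move=> Y /=; apply/andP/eqP => [[/andP [YL sHY] nYH]|->].
  have cY := intlat_canon YL.
  apply: full_eq => //; apply/eqP; rewrite eqn_leq rank_leq_col /=.
  have : (\rank H < \rank Y)%N.
    rewrite ltnNge; apply/negP => rY; move/negP: nYH; apply; apply/eqP.
    by apply/esym/canon_eq.
  rewrite rH; move: (\rank Y) => b; lia.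
split; first by rewrite fullsp_in /fullsp genmxE submx1.
by apply/eqP => eH; move: rH; rewrite -eH rank_fullsp; lia.
Qed.

Lemma coef_charpoly (A : {set M}) (hA : arrangement A) :
  (charpoly_arr A)`_l.-1 = - (#|A|%:R).
Proof.
rewrite /charpoly_arr coef_sum.
under eq_bigr do rewrite coefCM coefXn.
rewrite (eq_bigr (fun X => if l.-1 == \rank X then mobius A X else 0)); last first.
  by move=> X _; case: eqP; rewrite ?mulr1 ?mulr0.
rewrite -big_mkcondr /=.
have -> : \sum_(X in intlat A | l.-1 == \rank X) mobius A X = \sum_(X in A) mobius A X.
  apply: eq_bigl => X; by rewrite eq_sym L_hyp.
rewrite (eq_bigr (fun _ => -1)); last by move=> H HA; rewrite mobius_hyp.
by rewrite sumr_const mulNrn.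
Qed.

Lemma coef_prod :
  (\prod_(i < l) ('X - ((q ^ i)%:R)%:P) : {poly int})`_l.-1 =
  - (\sum_(i < l) q ^ i)%N%:R.
Proof.
have e : \prod_(i < l) ('X - ((q ^ i)%:R)%:P) =
         \prod_(p <- [seq ((q ^ i)%:R : int) | i : 'I_l <- index_enum 'I_l]) ('X - p%:P).
  by rewrite big_map.
have sz : size [seq ((q ^ i)%:R : int) | i : 'I_l <- index_enum 'I_l] = l.
  by rewrite size_map /index_enum locked_withE -enumT size_enum_ord.
rewrite e; set s := [seq _ | _ <- _] in sz *.
have -> : l.-1 = (size s).-1 by rewrite sz.
rewrite coefPn_prod_XsubC ?sz; last by lia.
by rewrite big_map natr_sum.
Qed.

Lemma card_A_all : #|A_all F l| = (\sum_(i < l) q ^ i)%N.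
Proof.
have := coef_charpoly A_all_arr; rewrite charpoly_all coef_prod.
by move/oppr_inj/eqP; rewrite eqr_nat => /eqP.
Qed.

Lemma card_formula : ((q ^ l - 1) %/ (q - 1))%N = (\sum_(i < l) q ^ i)%N.
Proof.
by rewrite !subn1 predn_exp mulKn //; have := q_gt1; lia.
Qed.

End Main.

Unset Implicit Arguments.

Theorem mainTheorem3 (F : finFieldType) (l : nat) (hl : (1 <= l)%N)
    (A : {set 'M[F]_l}) (hA : arrangement A) :
  let q := #|F| in
  [<-> A = A_all F l;
       #|A| = ((q ^ l - 1) %/ (q - 1))%N;
       charpoly_arr A = \prod_(i < l) ('X - ((q ^ i)%:R)%:P);
       (charpoly_arr A).[((q ^ l.-1)%N)%:R] = 0].
Proof.
move=> q; tfae.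
- by move=> ->; rewrite (card_A_all F hl) (card_formula F hl).
- move=> hb; have eA : A = A_all F l.
    apply/eqP; rewrite eqEcard (A_sub hA) /= hb (card_A_all F hl) (card_formula F hl).
    by rewrite leqnn.
  by rewrite eA (charpoly_all F hl).
- move=> ->; rewrite horner_prod.
  have lt : (l.-1 < l)%N by lia.
  by rewrite (bigD1 (Ordinal lt)) //= hornerXsubC subrr mul0r.
- exact: (d_a hl hA).
Qed.
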